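(* Let $F$ be an exponential functor and write $\theta_{jk}=F(t_j)-F(t_k)$. Then the $R_F^W$-submodule $(I_F^{\mathrm{sgn}})^W$ of $(R_F^{\mathrm{sgn}})^W$ is generated by the two antisymmetric elements $q_+=\theta_{12}t_3+\theta_{23}t_1+\theta_{31}t_2$ and $q_-=\theta_{12}t_3^{-1}+\theta_{23}t_1^{-1}+\theta_{31}t_2^{-1}$, and $$\Psi(q_\pm)=-\frac{1}{\Delta}\det\begin{pmatrix}F(t_1)&F(t_2)&F(t_3)\\ t_1^{\pm1}&t_2^{\pm1}&t_3^{\pm1}\\1&1&1\end{pmatrix}.$$ Consequently $\Psi((I_F^{\mathrm{sgn}})^W)$ is generated by these two elements.
   Context: An exponential functor is a functor $F$ on finite-dimensional complex inner product spaces and unitary isomorphisms, preserving adjoints, with natural unitary isomorphisms $F(V\oplus W)\cong F(V)\otimes F(W)$, $F(0)\cong\mathbb C$, associative and unital. $R(\mathbb T^2)\cong\mathbb Z[t_i^{\pm1}]/(t_1t_2t_3-1)$ is the representation ring of the diagonal maximal torus of $SU(3)$, $F(t_i)$ the character of $F(\mathbb C)$ with $\mathbb T^2$ acting via the $i$-th diagonal entry, $R_F=R(\mathbb T^2)[(F(t_1)F(t_2)F(t_3))^{-1}]\otimes\mathbb Q$. $W=S_3$ acts on $R_F$ by permuting $t_1,t_2,t_3$; $R_F^W$ denotes invariants. $R_F^{\mathrm{sgn}}$ is $R_F$ with the action $w\cdot p=\mathrm{sgn}(w)w(p)$, and $(R_F^{\mathrm{sgn}})^W$ its invariants (the antisymmetric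 elements), an $R_F^W$-module. $I_F^{\mathrm{sgn}}\subset R_F^{\mathrm{sgn}}$ is the ideal $(F(t_2)-F(t_1),F(t_3)-F(t_2))$ with the signed action and $(I_F^{\mathrm{sgn}})^W$ its invariants. $\Delta=(t_1-t_2)(t_2-t_3)(t_3-t_1)$ and $\Psi\colon(R_F^{\mathrm{sgn}})^W\to R_F^W$, $p\mapsto p/\Delta$, is the $R_F^W$-module isomorphism given by division by $\Delta$. *)

(* Defs.v *)
From HB Require Import structures.
From mathcomp Require Import all_boot all_order all_algebra all_fingroup.
From mathcomp Require Import mpoly.
Set Implicit Arguments. Unset Strict Implicit. Unset Printing Implicit Defensive.
Import Order.TTheory GRing.Theory Num.Theory.
Local Open Scope ring_scope.

(* R(T^2) (x) Q  =  Q[t1^{+-1},t2^{+-1},t3^{+-1}]/(t1 t2 t3 - 1)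
                =  Q[t1,t2,t3]/(t1 t2 t3 - 1)   (t_i^{-1} = product of the two others).
   Variables t1,t2,t3 are 'X_0,'X_1,'X_2 of {mpoly rat[3]}; W = S_3 = 'S_3 acts by msym. *)
Notation Pol := {mpoly rat[3]}.

Definition tv (i : 'I_3) : Pol := 'X_i.
(* representative of t_i^{-1} *)
Definition tinv (i : 'I_3) : Pol := \prod_(j < 3 | j != i) 'X_j.
Definition relT : Pol := 'X_0 * 'X_1 * 'X_2 - 1.

(* A Laurent polynomial f(t) = t^{-m} * g(t) in R(U(1)) = Z[t^{+-1}];
   F(t_i) is f evaluated at t_i, as an element of R(T^2) (x) Q. *)
Definition Fch (m : nat) (g : {poly int}) (i : 'I_3) : Pol :=
  tinv i ^+ m * \sum_(k < size g) (g`_k)%:~R *: (tv i ^+ k).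

Definition Dloc (m : nat) (g : {poly int}) : Pol := \prod_(i < 3) Fch m g i.

(* Elements of R_F = (R(T^2) (x) Q)[D^{-1}] are represented as fractions P / D^k *)
Record RF := mkRF { rnum : Pol; rexp : nat }.

Section RFops.
Variables (m : nat) (g : {poly int}).
Let D := Dloc m g.

(* equality in the localisation of Q[t1,t2,t3]/(t1t2t3-1) at D *)
Definition eqRF (x y : RF) : Prop :=
  exists (n : nat) (c : Pol),
    D ^+ n * (D ^+ rexp y * rnum x - D ^+ rexp x * rnum y) = c * relT.

Definition inRF (P : Pol) : RF := mkRF P 0.
Definition addRF (x y : RF) : RF :=
  mkRF (D ^+ rexp y * rnum x + D ^+ rexp x * rnum y) (rexp x + rexp y).
Definition mulRF (x y : RF) : RF := mkRF (rnum x * rnum y) (rexp x + rexp y).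

(* W = S_3 acts by permuting t1,t2,t3 (D is W-invariant) *)
Definition actRF (s : 'S_3) (x : RF) : RF := mkRF (msym s (rnum x)) (rexp x).
Definition sactRF (s : 'S_3) (x : RF) : RF :=
  mkRF ((-1) ^+ odd_perm s * msym s (rnum x)) (rexp x).

Definition symRF (x : RF) : Prop := forall s : 'S_3, eqRF (actRF s x) x.
Definition antiRF (x : RF) : Prop := forall s : 'S_3, eqRF (sactRF s x) x.

Definition inIF (x : RF) : Prop :=
  exists a b : RF,
    eqRF x (addRF (mulRF a (inRF (Fch m g 1 - Fch m g 0)))
                  (mulRF b (inRF (Fch m g 2 - Fch m g 1)))).

Definition theta (j k : 'I_3) : Pol := Fch m g j - Fch m g k.

Definition qplus : RF :=
  inRF (theta 0 1 * tv 2 + theta 1 2 * tv 0 + theta 2 0 * tv 1).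
Definition qminus : RF :=
  inRF (theta 0 1 * tinv 2 + theta 1 2 * tinv 0 + theta 2 0 * tinv 1).

Definition detMat (plus : bool) : Pol :=
  \det (\matrix_(i < 3, j < 3)
          (if i == 0 :> nat then Fch m g j
           else if i == 1 :> nat then (if plus then tv j else tinv j)
           else 1)).
End RFops.

Definition Delta : Pol := ('X_0 - 'X_1) * ('X_1 - 'X_2) * ('X_2 - 'X_0).

(* Main.v *)
Require Import Defs.
From HB Require Import structures.
From mathcomp Require Import all_boot all_order all_algebra all_fingroup.
From mathcomp Require Import mpoly.
From mathcomp Require Import ring.
Import GRing.Theory.
Local Open Scope ring_scope.
From mathcomp Require Import zify.
Lemma tr (D x y : Pol) (a b : nat) : D ^+ (a + b) * x - D ^+ a * (D ^+ b * x) = 0.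
Proof. rewrite exprD. ring. Qed.
Lemma msymXU (s : 'S_3) (i : 'I_3) : msym s ('X_i : Pol) = 'X_(s i).
Proof.
rewrite /msym mmapX /mmap1 (bigD1 i) //= big1 ?mulr1.
  by rewrite mnm1E eqxx expr1.
by move=> j /negPf ji; rewrite mnm1E eq_sym ji expr0.
Qed.
Lemma ord3 (i : 'I_3) : [\/ i = 0, i = 1 | i = 2].
Proof.
case: i => [[|[|[|k]]] Hk] //.
- by constructor 1; apply: val_inj.
- by constructor 2; apply: val_inj.
- by constructor 3; apply: val_inj.
Qed.
Lemma prod3 (R : comRingType) (F : 'I_3 -> R) : \prod_(i<3) F i = F 0 * F 1 * F 2.
Proof.
rewrite !big_ord_recr big_ord0 /= mul1r; congr (F _ * F _ * F _); exact: val_inj.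
Qed.
Lemma sum3 (R : comRingType) (F : 'I_3 -> R) : \sum_(i<3) F i = F 0 + F 1 + F 2.
Proof.
rewrite !big_ord_recr big_ord0 /= add0r; congr (F _ + F _ + F _); exact: val_inj.
Qed.
Lemma tinvE : [/\ tinv 0 = 'X_1 * 'X_2, tinv 1 = 'X_0 * 'X_2 & tinv 2 = 'X_0 * 'X_1].
Proof. by split; rewrite /tinv big_mkcond prod3 /= ?mul1r ?mulr1. Qed.
Lemma msymXn (s : 'S_3) (p : Pol) k : msym s (p ^+ k) = msym s p ^+ k.
Proof. exact: rmorphXn. Qed.
Lemma msym_sum (s : 'S_3) I r (P : pred I) (F : I -> Pol) :
  msym s (\sum_(i <- r | P i) F i) = \sum_(i <- r | P i) msym s (F i).
Proof. exact: raddf_sum. Qed.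
Lemma msym_prod (s : 'S_3) I r (P : pred I) (F : I -> Pol) :
  msym s (\prod_(i <- r | P i) F i) = \prod_(i <- r | P i) msym s (F i).
Proof. exact: rmorph_prod. Qed.
Definition symP (p : Pol) := forall s : 'S_3, msym s p = p.
Lemma msym_tinv (s : 'S_3) i : msym s (tinv i) = tinv (s i).
Proof.
rewrite /tinv msym_prod.
rewrite [RHS](reindex_inj (@perm_inj _ s)) /=.
apply: eq_big => [j|j _]; first by rewrite (inj_eq perm_inj).
exact: msymXU.
Qed.
Lemma msym_Fch m g (s : 'S_3) i : msym s (Fch m g i) = Fch m g (s i).
Proof.
rewrite /Fch msymM msymXn msym_tinv msym_sum; congr (_ * _).
apply: eq_bigr => k _; by rewrite msymZ msymXn /tv msymXU.
Qed.
Definition e1 : Pol := \sum_i 'X_i.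
Definition e2 : Pol := \sum_i tinv i.
Definition e3 : Pol := \prod_i 'X_i.
Lemma e1E : e1 = 'X_0 + 'X_1 + 'X_2. Proof. by rewrite /e1 sum3. Qed.
Lemma e2E : e2 = 'X_1 * 'X_2 + 'X_0 * 'X_2 + 'X_0 * 'X_1.
Proof. by case: tinvE => h0 h1 h2; rewrite /e2 sum3 h0 h1 h2. Qed.
Lemma e3E : e3 = 'X_0 * 'X_1 * 'X_2. Proof. by rewrite /e3 prod3. Qed.
Lemma sym_e1 : symP e1.
Proof.
move=> s; rewrite /e1 msym_sum [RHS](reindex_inj (@perm_inj _ s)) /=.
by apply: eq_bigr => i _; rewrite msymXU.
Qed.
Lemma sym_e2 : symP e2.
Proof.
move=> s; rewrite /e2 msym_sum [RHS](reindex_inj (@perm_inj _ s)) /=.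
by apply: eq_bigr => i _; rewrite msym_tinv.
Qed.
Lemma sym_e3 : symP e3.
Proof.
move=> s; rewrite /e3 msym_prod [RHS](reindex_inj (@perm_inj _ s)) /=.
by apply: eq_bigr => i _; rewrite msymXU.
Qed.
Lemma sym_D m g : symP (Dloc m g).
Proof.
move=> s; rewrite /Dloc msym_prod [RHS](reindex_inj (@perm_inj _ s)) /=.
by apply: eq_bigr => i _; rewrite msym_Fch.
Qed.
Lemma relTE : relT = e3 - 1. Proof. by rewrite e3E. Qed.
Lemma sym_relT : symP relT.
Proof. by move=> s; rewrite relTE msymB msym1 sym_e3. Qed.
Lemma symPE p : symP p <-> p \is symmetric.
Proof. by split => [h|/issymP]; [apply/issymP|]. Qed.
Definition t01 : 'S_3 := tperm 0 1.
Definition t12 : 'S_3 := tperm 1 2.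
Definition t02 : 'S_3 := tperm 0 2.
Definition c1 : 'S_3 := (t01 * t12)%g.
Definition c2 : 'S_3 := (t12 * t01)%g.
Lemma t01E : [/\ t01 0 = 1, t01 1 = 0 & t01 2 = 2].
Proof. by rewrite /t01 !permE. Qed.
Lemma t12E : [/\ t12 0 = 0, t12 1 = 2 & t12 2 = 1].
Proof. by rewrite /t12 !permE. Qed.
Lemma t02E : [/\ t02 0 = 2, t02 1 = 1 & t02 2 = 0].
Proof. by rewrite /t02 !permE. Qed.
Lemma c1E : [/\ c1 0 = 2, c1 1 = 0 & c1 2 = 1].
Proof. by rewrite /c1 !permM; case: t01E => -> -> ->; case: t12E => -> -> ->. Qed.
Lemma c2E : [/\ c2 0 = 1, c2 1 = 2 & c2 2 = 0].
Proof. by rewrite /c2 !permM; case: t12E => -> -> ->; case: t01E => -> -> ->. Qed.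
Lemma odd_t01 : odd_perm t01. Proof. by rewrite /t01 odd_tperm. Qed.
Lemma odd_t12 : odd_perm t12. Proof. by rewrite /t12 odd_tperm. Qed.
Lemma odd_t02 : odd_perm t02. Proof. by rewrite /t02 odd_tperm. Qed.
Lemma odd_c1 : odd_perm c1 = false. Proof. by rewrite /c1 odd_permM odd_t01 odd_t12. Qed.
Lemma odd_c2 : odd_perm c2 = false. Proof. by rewrite /c2 odd_permM odd_t01 odd_t12. Qed.
Lemma S3_cases (s : 'S_3) :
  s = 1%g \/ s = t01 \/ s = t12 \/ s = t02 \/ s = c1 \/ s = c2.
Proof.
have inj := @perm_inj _ s.
have E : forall a b c : 'I_3, s 0 = a -> s 1 = b -> s 2 = c -> forall p : 'S_3,
   p 0 = a -> p 1 = b -> p 2 = c -> s = p.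
  move=> a b c h0 h1 h2 p p0 p1 p2; apply/permP => i.
  by case: (ord3 i) => ->; rewrite ?h0 ?h1 ?h2 ?p0 ?p1 ?p2.
case: t01E => a0 a1 a2; case: t12E => b0 b1 b2; case: t02E => d0 d1 d2.
case: c1E => f0 f1 f2; case: c2E => g0 g1 g2.
case: (ord3 (s 0)) => h0; case: (ord3 (s 1)) => h1; case: (ord3 (s 2)) => h2;
  try (by have := inj 0 1 (etrans h0 (esym h1)));
  try (by have := inj 0 2 (etrans h0 (esym h2)));
  try (by have := inj 1 2 (etrans h1 (esym h2))).
- by left; apply: (E _ _ _ h0 h1 h2); rewrite perm1.
- by do 2 right; left; apply: (E _ _ _ h0 h1 h2).
- by right; left; apply: (E _ _ _ h0 h1 h2).
- by do 5 right; apply: (E _ _ _ h0 h1 h2).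
- by do 4 right; left; apply: (E _ _ _ h0 h1 h2).
- by do 3 right; left; apply: (E _ _ _ h0 h1 h2).
Qed.
Lemma Pol_ind (Q : Pol -> Prop) : Q 1 ->
  (forall p q, Q p -> Q q -> Q (p + q)) ->
  (forall (c : rat) p, Q p -> Q (c *: p)) ->
  (forall i p, Q p -> Q ('X_i * p)) -> forall p, Q p.
Proof.
move=> h1 hD hZ hX.
have hXn : forall i k p, Q p -> Q ('X_i ^+ k * p).
  move=> i; elim=> [|k IH] p hp; first by rewrite expr0 mul1r.
  by rewrite exprS -mulrA; apply: hX; apply: IH.
have h0 : Q 0 by rewrite -(scale0r (1 : Pol)); apply: hZ.
elim/mpolyind => [//|c m p _ _ hp]; apply: hD => //; apply: hZ.
rewrite mpolyXE_id prod3 -[X in Q X]mulr1 -!mulrA.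
by do 3 apply: (hXn _ _ _).
Qed.
Lemma e1s : e1 \is symmetric. Proof. exact/symPE/sym_e1. Qed.
Lemma e2s : e2 \is symmetric. Proof. exact/symPE/sym_e2. Qed.
Lemma e3s : e3 \is symmetric. Proof. exact/symPE/sym_e3. Qed.
Ltac symtac := repeat match goal with
  | |- is_true ((_ + _) \in _) => apply: rpredD
  | |- is_true ((- _) \in _) => rewrite rpredN
  | |- is_true ((_ * _) \in _) => apply: rpredM
  | |- is_true ((_ *: _) \in _) => apply: rpredZ
  | |- is_true ((_ ^+ _) \in _) => apply: rpredX
  | |- is_true (e1 \in _) => exact: e1s
  | |- is_true (e2 \in _) => exact: e2s
  | |- is_true (e3 \in _) => exact: e3s
  | |- is_true ((_%:R) \in _) => exact: rpred_nat
  | h : forall k : nat, is_true (?f k \in _) |- is_true (?f _ \in _) => exact: h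
  | h : is_true (?a \in _) |- is_true (?a \in _) => exact: h
  end.
Definition bcomb (c : nat -> Pol) : Pol :=
  c 0%N + c 1%N * 'X_0 + c 2%N * 'X_0 ^+ 2 + c 3%N * 'X_1 + c 4%N * ('X_0 * 'X_1)
  + c 5%N * ('X_0 ^+ 2 * 'X_1).
Definition decP (p : Pol) :=
  exists c : nat -> Pol, (forall k, c k \is symmetric) /\ p = bcomb c.
Lemma decP_all p : decP p.
Proof.
elim/Pol_ind: p.
- exists (fun k => if k is 0%N then 1 else 0); split; first by case=> *; rewrite ?rpred0 ?rpred1.
  by rewrite /bcomb; ring.
- move=> p q [c [hc ->]] [d [hd ->]]; exists (fun k => c k + d k); split.
    by move=> k; rewrite rpredD.
  by rewrite /bcomb; ring.
- move=> a p [c [hc ->]]; exists (fun k => a *: c k); split.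
    by move=> k; rewrite rpredZ.
  by rewrite /bcomb !scalerDr -!scalerAl.
have h0 : forall p, decP p -> decP ('X_0 * p).
  move=> p [c [hc ->]].
  exists (fun k => match k with 0%N => e3 * c 2%N | 1%N => c 0%N - e2 * c 2%N
     | 2%N => c 1%N + e1 * c 2%N | 3%N => e3 * c 5%N | 4%N => c 3%N - e2 * c 5%N
     | _ => c 4%N + e1 * c 5%N end); split.
    by case=> [|[|[|[|[|k]]]]] /=; symtac.
  by rewrite /bcomb e1E e2E e3E; ring.
have h1 : forall p, decP p -> decP ('X_1 * p).
  move=> p [c [hc ->]].
  exists (fun k => match k with 0%N => - e2 * c 3%N - e3 * c 4%N | 1%N => e1 * c 3%N - e3 * c 5%N
     | 2%N => - c 3%N | 3%N => c 0%N + e1 * c 3%N - e3 * c 5%N | 4%N => c 1%N - c 3%N + e1 * c 4%N + e2 * c 5%N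
     | _ => c 2%N - c 4%N end); split.
    by case=> [|[|[|[|[|k]]]]] /=; symtac.
  by rewrite /bcomb e1E e2E e3E; ring.
move=> i p hp; case: (ord3 i) => ->; [exact: h0|exact: h1|].
have -> : 'X_2 * p = e1 * p - 'X_0 * p - 'X_1 * p by rewrite e1E; ring.
case: (h0 p hp) => [d [hd ->]]; case: (h1 p hp) => [f [hf ->]].
case: hp => [c [hc ->]].
exists (fun k => e1 * c k - d k - f k); split; first by move=> k; symtac.
by rewrite /bcomb; ring.
Qed.
Definition Alt6 (P : Pol) : Pol :=
  P - msym t01 P - msym t12 P - msym t02 P + msym c1 P + msym c2 P.
Lemma t01_0 : t01 0 = 1. Proof. by case: t01E. Qed.
Lemma t01_1 : t01 1 = 0. Proof. by case: t01E. Qed.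
Lemma t01_2 : t01 2 = 2. Proof. by case: t01E. Qed.
Lemma t12_0 : t12 0 = 0. Proof. by case: t12E. Qed.
Lemma t12_1 : t12 1 = 2. Proof. by case: t12E. Qed.
Lemma t12_2 : t12 2 = 1. Proof. by case: t12E. Qed.
Lemma t02_0 : t02 0 = 2. Proof. by case: t02E. Qed.
Lemma t02_1 : t02 1 = 1. Proof. by case: t02E. Qed.
Lemma t02_2 : t02 2 = 0. Proof. by case: t02E. Qed.
Lemma c1_0 : c1 0 = 2. Proof. by case: c1E. Qed.
Lemma c1_1 : c1 1 = 0. Proof. by case: c1E. Qed.
Lemma c1_2 : c1 2 = 1. Proof. by case: c1E. Qed.
Lemma c2_0 : c2 0 = 1. Proof. by case: c2E. Qed.
Lemma c2_1 : c2 1 = 2. Proof. by case: c2E. Qed.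
Lemma c2_2 : c2 2 = 0. Proof. by case: c2E. Qed.
Definition permvalsE := (t01_0, t01_1, t01_2, t12_0, t12_1, t12_2, t02_0, t02_1, t02_2, c1_0, c1_1, c1_2, c2_0, c2_1, c2_2).
Lemma Alt_u m g (c : nat -> Pol) : (forall k, c k \is symmetric) ->
  Alt6 (bcomb c * (Fch m g 1 - Fch m g 0)) =
  (c 1%N + e1 * c 2%N + c 3%N) * rnum (qplus m g)
  + (c 2%N - 2%:R * c 4%N - e1 * c 5%N) * rnum (qminus m g).
Proof.
move=> hc; have hs : forall s k, msym s (c k) = c k by move=> s k; apply/issymP.
rewrite /Alt6 /bcomb !(msymD, msymB, msymN, msymM, msymXn, msymXU, msym_Fch, hs).
rewrite !permvalsE.
case: tinvE => h0 h1 h2.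
rewrite /qplus /qminus /= /theta /tv h0 h1 h2 e1E.
move: (Fch m g 0) (Fch m g 1) (Fch m g 2) => F0 F1 F2.
move: (c 0%N) (c 1%N) (c 2%N) (c 3%N) (c 4%N) (c 5%N) => C0 C1 C2 C3 C4 C5.
move: ('X_0 : Pol) ('X_1 : Pol) ('X_2 : Pol) => X0 X1 X2.
ring.
Qed.
Lemma Alt_v m g (c : nat -> Pol) : (forall k, c k \is symmetric) ->
  Alt6 (bcomb c * (Fch m g 2 - Fch m g 1)) =
  (- 2%:R * c 1%N - 2%:R * e1 * c 2%N + c 3%N - e2 * c 5%N) * rnum (qplus m g)
  + (- 2%:R * c 2%N + c 4%N) * rnum (qminus m g).
Proof.
move=> hc; have hs : forall s k, msym s (c k) = c k by move=> s k; apply/issymP.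
rewrite /Alt6 /bcomb !(msymD, msymB, msymN, msymM, msymXn, msymXU, msym_Fch, hs).
rewrite !permvalsE.
case: tinvE => h0 h1 h2.
rewrite /qplus /qminus /= /theta /tv h0 h1 h2 e1E e2E.
move: (Fch m g 0) (Fch m g 1) (Fch m g 2) => F0 F1 F2.
move: (c 0%N) (c 1%N) (c 2%N) (c 3%N) (c 4%N) (c 5%N) => C0 C1 C2 C3 C4 C5.
move: ('X_0 : Pol) ('X_1 : Pol) ('X_2 : Pol) => X0 X1 X2.
ring.
Qed.
Definition I0 (P : Pol) := exists c, P = c * relT.
Lemma I0_0 : I0 0. Proof. by exists 0; rewrite mul0r. Qed.
Lemma I0D P Q : I0 P -> I0 Q -> I0 (P + Q).
Proof. by move=> [a ->] [b ->]; exists (a + b); rewrite mulrDl. Qed.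
Lemma I0N P : I0 P -> I0 (- P).
Proof. by move=> [a ->]; exists (- a); rewrite mulNr. Qed.
Lemma I0B P Q : I0 P -> I0 Q -> I0 (P - Q).
Proof. by move=> hP hQ; apply: I0D => //; apply: I0N. Qed.
Lemma I0M Q P : I0 P -> I0 (Q * P).
Proof. by move=> [a ->]; exists (Q * a); rewrite mulrA. Qed.
Lemma I0Z (c : rat) P : I0 P -> I0 (c *: P).
Proof. by move=> [a ->]; exists (c *: a); rewrite scalerAl. Qed.
Lemma I0_eq P Q : P = Q -> I0 Q -> I0 P. Proof. by move=> ->. Qed.
Lemma I0_msym s P : I0 P -> I0 (msym s P).
Proof. by move=> [a ->]; exists (msym s a); rewrite msymM (sym_relT s). Qed.
Lemma I0_pow (D P : Pol) a b : (a <= b)%N -> I0 (D ^+ a * P) -> I0 (D ^+ b * P).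
Proof.
move=> hab h; rewrite -(subnKC hab) exprD (mulrC (D ^+ a)) -mulrA; exact: I0M.
Qed.
Lemma sum2 (R : comRingType) (F : 'I_2 -> R) : \sum_(i<2) F i = F 0 + F 1.
Proof.
rewrite !big_ord_recr big_ord0 /= add0r; congr (F _ + F _); exact: val_inj.
Qed.
Lemma ordE (i : 'I_3) : i = if val i == 0%N then 0 else if val i == 1%N then 1 else 2.
Proof. by case: (ord3 i) => ->. Qed.
Lemma det3 (R : comRingType) (A : 'M[R]_3) : \det A =
  A 0 0 * A 1 1 * A 2 2 + A 0 1 * A 1 2 * A 2 0 + A 0 2 * A 1 0 * A 2 1
  - A 0 0 * A 1 2 * A 2 1 - A 0 1 * A 1 0 * A 2 2 - A 0 2 * A 1 1 * A 2 0.
Proof.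
rewrite (expand_det_row _ 0) sum3 /cofactor.
rewrite !(expand_det_row _ 0) !sum2 /cofactor !det_mx11 !mxE.
do ?[rewrite [lift _ _]ordE /=].
rewrite !modn_small //=; ring.
Qed.
Definition QPf m g : Pol := theta m g 0 1 * tv 2 + theta m g 1 2 * tv 0 + theta m g 2 0 * tv 1.
Definition QMf m g : Pol := theta m g 0 1 * tinv 2 + theta m g 1 2 * tinv 0 + theta m g 2 0 * tinv 1.
Lemma detP m g : - detMat m g true = QPf m g.
Proof.
rewrite /detMat det3 !mxE /= /QPf /theta /tv.
move: (Fch m g 0) (Fch m g 1) (Fch m g 2) => F0 F1 F2;
move: ('X_0 : Pol) ('X_1 : Pol) ('X_2 : Pol) => X0 X1 X2; ring.
Qed.
Lemma detM m g : - detMat m g false = QMf m g.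
Proof.
rewrite /detMat det3 !mxE /= /QMf /theta.
move: (Fch m g 0) (Fch m g 1) (Fch m g 2) => F0 F1 F2;
move: (tinv 0) (tinv 1) (tinv 2) => X0 X1 X2; ring.
Qed.
Definition Alin (n : nat) : Pol :=
  'X_0 ^+ n * ('X_2 - 'X_1) + 'X_1 ^+ n * ('X_0 - 'X_2) + 'X_2 ^+ n * ('X_1 - 'X_0).
Fixpoint rho3 (n : nat) : Pol * Pol * Pol :=
  match n with
  | 0%N => (0, 0, 1)
  | k.+1 => let: (a, b, c) := rho3 k in (b, c, e1 * c - e2 * b + e3 * a)
  end.
Definition rho n := (rho3 n).1.1.
Lemma rhoS1 n : rho n.+1 = (rho3 n).1.2.
Proof. by rewrite /rho /=; case: (rho3 n) => [[a b] c]. Qed.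
Lemma rhoS2 n : rho n.+2 = (rho3 n).2.
Proof. by rewrite rhoS1 /=; case: (rho3 n) => [[a b] c]. Qed.
Lemma rho_rec n : rho n.+3 = e1 * rho n.+2 - e2 * rho n.+1 + e3 * rho n.
Proof.
rewrite rhoS2 rhoS2 rhoS1 /rho /=; by case: (rho3 n) => [[a b] c].
Qed.
Lemma rho012 : [/\ rho 0 = 0, rho 1 = 0 & rho 2 = 1].
Proof. by []. Qed.
Lemma Alin_rec n : Alin n.+3 = e1 * Alin n.+2 - e2 * Alin n.+1 + e3 * Alin n.
Proof.
rewrite /Alin !exprS e1E e2E e3E.
move: ('X_0 ^+ n : Pol) ('X_1 ^+ n : Pol) ('X_2 ^+ n : Pol) => a b c.
move: ('X_0 : Pol) ('X_1 : Pol) ('X_2 : Pol) => X0 X1 X2; ring.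
Qed.
Lemma Delta_rho n : Delta * rho n = Alin n.
Proof.
suff: [/\ Delta * rho n = Alin n, Delta * rho n.+1 = Alin n.+1 & Delta * rho n.+2 = Alin n.+2].
  by case.
elim: n => [|n [h0 h1 h2]].
  rewrite /rho /= /Alin /Delta.
  by split; move: ('X_0 : Pol) ('X_1 : Pol) ('X_2 : Pol) => X0 X1 X2; ring.
split => //; rewrite rho_rec Alin_rec -h0 -h1 -h2.
move: (rho n) (rho n.+1) (rho n.+2) e1 e2 e3 Delta => a b c E1 E2 E3 Dl; ring.
Qed.
Lemma rho_sym n : rho n \is symmetric.
Proof.
suff: [/\ rho n \is symmetric, rho n.+1 \is symmetric & rho n.+2 \is symmetric].
  by case.
elim: n => [|n [h0 h1 h2]]; first by rewrite /rho /= rpred0 rpred1.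
by split => //; rewrite rho_rec; symtac.
Qed.
Definition Qg m (g : {poly int}) : {poly Pol} :=
  ('X^2 - e1%:P * 'X + e2%:P) ^+ m *
  \sum_(k < size g) (((g`_k)%:~R : rat)%:MP)%:P * 'X^k.
Lemma tinv_quad i : tinv i = 'X_i ^+ 2 - e1 * 'X_i + e2.
Proof.
case: tinvE => h0 h1 h2; rewrite e1E e2E.
by case: (ord3 i) => ->; rewrite ?h0 ?h1 ?h2;
  move: ('X_0 : Pol) ('X_1 : Pol) ('X_2 : Pol) => X0 X1 X2; ring.
Qed.
Lemma Fch_horner m g i : Fch m g i = (Qg m g).[ 'X_i ].
Proof.
rewrite /Fch /Qg hornerM horner_exp !hornerE horner_sum tinv_quad; congr (_ * _).
apply: eq_bigr => k _; by rewrite !hornerE mul_mpolyC /tv.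
Qed.
Lemma Qg_sym m g : Qg m g \is a polyOver (@symmetric_pred 3 rat).
Proof.
rewrite /Qg; apply: rpredM; first apply: rpredX.
  apply: rpredD; last by rewrite polyOverC; exact: e2s.
  apply: rpredB; first exact: polyOverXn.
  apply: rpredM; last exact: polyOverX.
  by rewrite polyOverC; exact: e1s.
apply: rpred_sum => k _; apply: rpredM; last exact: polyOverXn.
rewrite polyOverC -[X in X \in _]mulr1 mul_mpolyC; apply: rpredZ; exact: rpred1.
Qed.
Lemma Qg_coef m g j : (Qg m g)`_j \is symmetric.
Proof. by move/polyOverP: (Qg_sym m g); apply. Qed.

Definition rhoP m g : Pol := \sum_(j < size (Qg m g)) (Qg m g)`_j * rho j.
Definition rhoM m g : Pol := - \sum_(j < size (Qg m g)) (Qg m g)`_j * rho j.+1.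
Lemma rhoP_sym m g : rhoP m g \is symmetric.
Proof. by apply: rpred_sum => j _; apply: rpredM; [exact: Qg_coef | exact: rho_sym]. Qed.
Lemma rhoM_sym m g : rhoM m g \is symmetric.
Proof. by rewrite rpredN; apply: rpred_sum => j _; apply: rpredM; [exact: Qg_coef | exact: rho_sym]. Qed.
Lemma Delta_rhoP m g : Delta * rhoP m g = QPf m g.
Proof.
have -> : QPf m g = Fch m g 0 * ('X_2 - 'X_1) + Fch m g 1 * ('X_0 - 'X_2) + Fch m g 2 * ('X_1 - 'X_0).
  rewrite /QPf /theta /tv.
  move: (Fch m g 0) (Fch m g 1) (Fch m g 2) => F0 F1 F2;
  move: ('X_0 : Pol) ('X_1 : Pol) ('X_2 : Pol) => X0 X1 X2; ring.
rewrite !Fch_horner !horner_coef !big_distrl -!big_split /rhoP mulr_sumr.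
apply: eq_bigr => j _ /=; rewrite mulrCA Delta_rho /Alin.
move: ((Qg m g)`_j) => q.
move: ('X_0 ^+ j : Pol) ('X_1 ^+ j : Pol) ('X_2 ^+ j : Pol) => a b c.
move: ('X_0 : Pol) ('X_1 : Pol) ('X_2 : Pol) => X0 X1 X2; ring.
Qed.
Lemma Delta_rhoM m g : Delta * rhoM m g = QMf m g.
Proof.
have -> : QMf m g = - (Fch m g 0 * ('X_0 * ('X_2 - 'X_1)) + Fch m g 1 * ('X_1 * ('X_0 - 'X_2))
     + Fch m g 2 * ('X_2 * ('X_1 - 'X_0))).
  rewrite /QMf /theta; case: tinvE => -> -> ->.
  move: (Fch m g 0) (Fch m g 1) (Fch m g 2) => F0 F1 F2;
  move: ('X_0 : Pol) ('X_1 : Pol) ('X_2 : Pol) => X0 X1 X2; ring.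
rewrite !Fch_horner !horner_coef !big_distrl -!big_split /rhoM mulrN mulr_sumr.
congr (- _); apply: eq_bigr => j _ /=; rewrite mulrCA Delta_rho /Alin !exprS.
move: ((Qg m g)`_j) => q.
move: ('X_0 ^+ j : Pol) ('X_1 ^+ j : Pol) ('X_2 ^+ j : Pol) => a b c.
move: ('X_0 : Pol) ('X_1 : Pol) ('X_2 : Pol) => X0 X1 X2; ring.
Qed.
Lemma QP_anti m g (s : 'S_3) : msym s (QPf m g) = (-1) ^+ odd_perm s * QPf m g.
Proof.
rewrite /QPf /theta /tv !(msymD, msymB, msymN, msymM, msymXU, msym_Fch).
case: (S3_cases s) => [->|[->|[->|[->|[->|->]]]]];
  rewrite ?odd_perm1 ?odd_t01 ?odd_t12 ?odd_t02 ?odd_c1 ?odd_c2 ?permvalsE ?perm1 /=;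
  move: (Fch m g 0) (Fch m g 1) (Fch m g 2) => F0 F1 F2;
  move: ('X_0 : Pol) ('X_1 : Pol) ('X_2 : Pol) => X0 X1 X2; ring.
Qed.
Lemma QM_anti m g (s : 'S_3) : msym s (QMf m g) = (-1) ^+ odd_perm s * QMf m g.
Proof.
rewrite /QMf /theta !(msymD, msymB, msymN, msymM, msym_tinv, msym_Fch).
case: tinvE => h0 h1 h2.
case: (S3_cases s) => [->|[->|[->|[->|[->|->]]]]];
  rewrite ?odd_perm1 ?odd_t01 ?odd_t12 ?odd_t02 ?odd_c1 ?odd_c2 ?permvalsE ?perm1 /= ?h0 ?h1 ?h2;
  move: (Fch m g 0) (Fch m g 1) (Fch m g 2) => F0 F1 F2;
  move: ('X_0 : Pol) ('X_1 : Pol) ('X_2 : Pol) => X0 X1 X2; ring.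
Qed.
Lemma anti_qplus m g : antiRF m g (qplus m g).
Proof.
move=> s; exists 0%N, 0; rewrite /= -/(QPf m g) QP_anti.
by rewrite signrMK expr0 !mul1r subrr mul0r.
Qed.
Lemma anti_qminus m g : antiRF m g (qminus m g).
Proof.
move=> s; exists 0%N, 0; rewrite /= -/(QMf m g) QM_anti.
by rewrite signrMK expr0 !mul1r subrr mul0r.
Qed.
Lemma inI_qplus m g : inIF m g (qplus m g).
Proof.
exists (inRF ('X_1 - 'X_2)), (inRF ('X_1 - 'X_0)); exists 0%N, 0.
rewrite /= !addn0 /theta /tv; move: (Dloc m g) => D.
move: (Fch m g 0) (Fch m g 1) (Fch m g 2) => F0 F1 F2;
move: ('X_0 : Pol) ('X_1 : Pol) ('X_2 : Pol) => X0 X1 X2; ring.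
Qed.
Lemma inI_qminus m g : inIF m g (qminus m g).
Proof.
exists (inRF (tinv 1 - tinv 2)), (inRF (tinv 1 - tinv 0)); exists 0%N, 0.
rewrite /= !addn0 /theta; move: (Dloc m g) => D.
move: (Fch m g 0) (Fch m g 1) (Fch m g 2) => F0 F1 F2;
move: (tinv 0) (tinv 1) (tinv 2) => X0 X1 X2; ring.
Qed.
Lemma subM (lq : 3.-tuple Pol) (p q : Pol) : (p * q) \mPo lq = (p \mPo lq) * (q \mPo lq).
Proof. exact: rmorphM. Qed.
Lemma sub1 (lq : 3.-tuple Pol) : (1 : Pol) \mPo lq = 1.
Proof. exact: comp_mpoly1. Qed.
Lemma sub_div (lq : 3.-tuple Pol) (L : Pol) :
  (forall i : 'I_3, exists d, 'X_i - lq`_i = L * d) ->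
  forall p, exists d, p - (p \mPo lq) = L * d.
Proof.
move=> hL; elim/Pol_ind; cbv beta.
- by exists 0; rewrite comp_mpoly1 subrr mulr0.
- move=> p q [d1 e1'] [d2 e2']; exists (d1 + d2).
  by rewrite comp_mpolyD mulrDr -e1' -e2' opprD addrACA.
- move=> c p [d e']; exists (c *: d).
  by rewrite comp_mpolyZ -scalerBr e' scalerAr.
- move=> i p [d e']; case: (hL i) => di hdi; exists (di * p + lq`_i * d).
  rewrite subM comp_mpolyXU.
  have -> : 'X_i * p - lq`_i * (p \mPo lq) = ('X_i - lq`_i) * p + lq`_i * (p - (p \mPo lq)) by ring.
  by rewrite hdi e'; ring.
Qed.
Lemma cancel_lin (lq : 3.-tuple Pol) (L : Pol) :
  (forall i : 'I_3, exists d, 'X_i - lq`_i = L * d) ->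
  L \mPo lq = 0 -> L != 0 -> relT \mPo lq != 0 ->
  forall Y c, L * Y = c * relT -> exists c', Y = c' * relT.
Proof.
move=> hL hL0 hLnz hR Y c e.
have := congr1 (comp_mpoly lq) e; rewrite !subM hL0 mul0r => /esym /eqP.
rewrite mulf_eq0 (negPf hR) orbF => /eqP hc.
case: (sub_div _ _ hL c) => d; rewrite hc subr0 => ec.
exists d; apply: (mulfI hLnz); by rewrite e ec mulrA.
Qed.
Definition pt (i : 'I_3) : rat := (i : nat)%:R.
Lemma nz_eval (p : Pol) : meval pt p != 0 -> p != 0.
Proof. by apply: contraNneq => ->; rewrite meval0. Qed.
Lemma cancel_Delta Y c : Delta * Y = c * relT -> exists c', Y = c' * relT.
Proof.
rewrite /Delta -!mulrA => e.
have nzX : forall (i j : 'I_3), pt i != pt j -> ('X_i - 'X_j : Pol) != 0.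
  by move=> i j h; apply: nz_eval; rewrite mevalB !mevalXU subr_eq0.
case: (@cancel_lin [tuple 'X_0; 'X_0; 'X_2] ('X_0 - 'X_1) _ _ _ _ _ _ e).
- move=> i; case: (ord3 i) => ->; first by exists 0; rewrite /= subrr mulr0.
    by exists (-1); rewrite /= mulrN1 opprB.
  by exists 0; rewrite /= subrr mulr0.
- by rewrite comp_mpolyB !comp_mpolyXU /= subrr.
- by apply: nzX.
- apply: nz_eval; rewrite relTE /e3 prod3 comp_mpolyB comp_mpoly1 !subM !comp_mpolyXU /=.
  by rewrite mevalB !mevalM !mevalXU meval1.
move=> c1' e1'.
case: (@cancel_lin [tuple 'X_0; 'X_1; 'X_1] ('X_1 - 'X_2) _ _ _ _ _ _ e1').
- move=> i; case: (ord3 i) => ->; first by exists 0; rewrite /= subrr mulr0.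
    by exists 0; rewrite /= subrr mulr0.
  by exists (-1); rewrite /= mulrN1 opprB.
- by rewrite comp_mpolyB !comp_mpolyXU /= subrr.
- by apply: nzX.
- apply: nz_eval; rewrite relTE /e3 prod3 comp_mpolyB comp_mpoly1 !subM !comp_mpolyXU /=.
  by rewrite mevalB !mevalM !mevalXU meval1.
move=> c2' e2'.
case: (@cancel_lin [tuple 'X_2; 'X_1; 'X_2] ('X_2 - 'X_0) _ _ _ _ _ _ e2').
- move=> i; case: (ord3 i) => ->; first by exists (-1); rewrite /= mulrN1 opprB.
    by exists 0; rewrite /= subrr mulr0.
  by exists 0; rewrite /= subrr mulr0.
- by rewrite comp_mpolyB !comp_mpolyXU /= subrr.
- by apply: nzX.
- apply: nz_eval; rewrite relTE /e3 prod3 comp_mpolyB comp_mpoly1 !subM !comp_mpolyXU /=.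
  by rewrite mevalB !mevalM !mevalXU meval1.
move=> c3' e3'; by exists c3'.
Qed.
Section EqRF.
Variables (m : nat) (g : {poly int}).
Local Notation eqR := (eqRF m g).
Local Notation addR := (addRF m g).

Lemma eqRF_exact x y : Dloc m g ^+ rexp y * rnum x = Dloc m g ^+ rexp x * rnum y -> eqR x y.
Proof. by move=> h; exists 0%N, 0; rewrite h subrr mulr0 mul0r. Qed.
Lemma eqRF_refl x : eqR x x. Proof. exact: eqRF_exact. Qed.
Lemma eqRF_sym x y : eqR x y -> eqR y x.
Proof.
case: x y => [x ex] [y ey] [n [c h]]; exists n, (- c); rewrite mulNr -h /=.
move: (Dloc m g) => D; ring.
Qed.
Lemma eqRF_trans x y z : eqR x y -> eqR y z -> eqR x z.
Proof.
case: x y z => [x ex] [y ey] [z ez] [n1 [c1 h1]] [n2 [c2 h2]].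
exists (n1 + n2 + ey)%N, (Dloc m g ^+ (n2 + ez) * c1 + Dloc m g ^+ (n1 + ex) * c2).
rewrite mulrDl -!mulrA -h1 -h2 /=; move: (Dloc m g) => D; rewrite !exprD; ring.
Qed.
Lemma eqRF_addl x x' y : eqR x x' -> eqR (addR x y) (addR x' y).
Proof.
case: x x' y => [x ex] [x' ex'] [y ey] [n [c h]].
exists n, (Dloc m g ^+ (ey + ey) * c); rewrite -mulrA -h /=.
move: (Dloc m g) => D; rewrite !exprD; ring.
Qed.
Lemma eqRF_mull x x' y : eqR x x' -> eqR (mulRF x y) (mulRF x' y).
Proof.
case: x x' y => [x ex] [x' ex'] [y ey] [n [c h]].
exists n, (Dloc m g ^+ ey * y * c); rewrite -[RHS]mulrA -h /=.
move: (Dloc m g) => D; rewrite !exprD; ring.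
Qed.
Lemma addRC x y : eqR (addR x y) (addR y x).
Proof.
case: x y => [x ex] [y ey]; apply: eqRF_exact => /=.
rewrite (addnC ey ex); ring.
Qed.
Lemma mulRC x y : eqR (mulRF x y) (mulRF y x).
Proof.
case: x y => [x ex] [y ey]; apply: eqRF_exact => /=.
rewrite (addnC ey ex); ring.
Qed.
Lemma eqRF_add x x' y y' : eqR x x' -> eqR y y' -> eqR (addR x y) (addR x' y').
Proof.
move=> hx hy; apply: (eqRF_trans _ _ _ (eqRF_addl _ _ y hx)).
apply: (eqRF_trans _ _ _ (addRC _ _)); apply: (eqRF_trans _ _ _ (eqRF_addl _ _ x' hy)).
exact: addRC.
Qed.
Lemma eqRF_mul x x' y y' : eqR x x' -> eqR y y' -> eqR (mulRF x y) (mulRF x' y').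
Proof.
move=> hx hy; apply: (eqRF_trans _ _ _ (eqRF_mull _ _ y hx)).
apply: (eqRF_trans _ _ _ (mulRC _ _)); apply: (eqRF_trans _ _ _ (eqRF_mull _ _ x' hy)).
exact: mulRC.
Qed.
Lemma eqRF_cancel x y : eqR (mulRF (inRF Delta) x) (mulRF (inRF Delta) y) -> eqR x y.
Proof.
case: x y => [x ex] [y ey] [n [c h]].
have h' : Delta * (Dloc m g ^+ n * (Dloc m g ^+ ey * x - Dloc m g ^+ ex * y)) = c * relT.
  rewrite -h /=; move: (Dloc m g) => D; rewrite !add0n; ring.
by case: (cancel_Delta _ _ h') => c' hc; exists n, c'.
Qed.
End EqRF.
Lemma Alt6D P Q : Alt6 (P + Q) = Alt6 P + Alt6 Q.
Proof.
rewrite /Alt6 !msymD.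
move: (msym t01 P) (msym t12 P) (msym t02 P) (msym c1 P) (msym c2 P) => a1 a2 a3 a4 a5.
move: (msym t01 Q) (msym t12 Q) (msym t02 Q) (msym c1 Q) (msym c2 Q) => b1 b2 b3 b4 b5.
move: P Q => P Q; ring.
Qed.
Lemma hT_gen {R : comRingType} (D x Z m1 m2 m3 m4 m5 z1 z2 z3 z4 z5 : R) N K :
  6%:R * (D ^+ (K + N) * x) - D ^+ K * (Z - z1 - z2 - z3 + z4 + z5) =
  D ^+ K * ((D ^+ N * x - Z) - (D ^+ N * m1 - z1) - (D ^+ N * m2 - z2)
     - (D ^+ N * m3 - z3) + (D ^+ N * m4 - z4) + (D ^+ N * m5 - z5))
  - D ^+ N * (D ^+ K * (- m1 - x) + D ^+ K * (- m2 - x) + D ^+ K * (- m3 - x)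
     + D ^+ K * (m4 - x) + D ^+ K * (m5 - x)).
Proof. rewrite exprD; ring. Qed.

Lemma part3 m g (p : RF) : antiRF m g p -> inIF m g p ->
  exists (A B : Pol) (E : nat), A \is symmetric /\ B \is symmetric /\
   eqRF m g p (addRF m g (mulRF (mkRF A E) (qplus m g)) (mulRF (mkRF B E) (qminus m g))).
Proof.
case: p => x e hA [[xa ea] [[xb eb] [n [c0 hI]]]].
have hs : forall s : 'S_3, exists k, I0 (Dloc m g ^+ k * ((-1) ^+ odd_perm s * msym s x - x)).
  move=> s; case: (hA s) => k [c hk]; exists (k + e)%N; exists c; rewrite -hk /=.
  move: ((-1) ^+ odd_perm s) (msym s x) (Dloc m g) => sg mx D.
  rewrite exprD; ring.
clear hA.
have symD : forall s, msym s (Dloc m g) = Dloc m g := sym_D m g.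
rewrite /= !addn0 in hI.
move: hs hI symD; move eD: (Dloc m g) => D hs hI symD.
move: hI; move eu: (Fch m g 1 - Fch m g 0) => u; move ev: (Fch m g 2 - Fch m g 1) => v hI.
have [ya eya] : exists ya, ya = D ^+ (n + e + eb) * xa by eexists.
have [yb eyb] : exists yb, yb = D ^+ (n + e + ea) * xb by eexists.
have hZ : I0 (D ^+ (n + (ea + eb)) * x - (ya * u + yb * v)).
  exists c0; rewrite -hI eya eyb !exprD; ring.
move: (n + (ea + eb))%N hZ => N hZ.
have hY : forall s, I0 (D ^+ N * msym s x - msym s (ya * u + yb * v)).
  move=> s; have := @I0_msym s _ hZ; by rewrite msymB msymM msymXn symD.
case: (hs t01) => k1 h1; case: (hs t12) => k2 h2; case: (hs t02) => k3 h3.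
case: (hs c1) => k4 h4; case: (hs c2) => k5 h5.
have [K hK] : exists K, K = (k1 + k2 + k3 + k4 + k5)%N by eexists.
have {}h1 := @I0_pow D _ k1 K (ltac:(rewrite hK; lia)) h1.
have {}h2 := @I0_pow D _ k2 K (ltac:(rewrite hK; lia)) h2.
have {}h3 := @I0_pow D _ k3 K (ltac:(rewrite hK; lia)) h3.
have {}h4 := @I0_pow D _ k4 K (ltac:(rewrite hK; lia)) h4.
have {}h5 := @I0_pow D _ k5 K (ltac:(rewrite hK; lia)) h5.
rewrite odd_t01 /= expr1 mulN1r in h1.
rewrite odd_t12 /= expr1 mulN1r in h2.
rewrite odd_t02 /= expr1 mulN1r in h3.
rewrite odd_c1 /= expr0 mul1r in h4.
rewrite odd_c2 /= expr0 mul1r in h5.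
have hT : I0 (6%:R * (D ^+ (K + N) * x) - D ^+ K * Alt6 (ya * u + yb * v)).
  rewrite /Alt6 (hT_gen (R := Pol) D x _ (msym t01 x) (msym t12 x) (msym t02 x) (msym c1 x) (msym c2 x)); apply: I0B; apply: I0M.
    by do ! [apply: (hY _) | apply: (hZ) | apply: I0D | apply: I0N].
  apply: I0D; [apply: I0D; [apply: I0D; [apply: I0D; [exact: h1|exact: h2]|exact: h3]|exact: h4]|exact: h5].
case: (decP_all ya) => ca [hca eya']; case: (decP_all yb) => cb [hcb eyb'].
have [At eAt] : exists At, At = (ca 1%N + e1 * ca 2%N + ca 3%N)
     + (- 2%:R * cb 1%N - 2%:R * e1 * cb 2%N + cb 3%N - e2 * cb 5%N) by eexists.
have [Bt eBt] : exists Bt, Bt = (ca 2%N - 2%:R * ca 4%N - e1 * ca 5%N) + (- 2%:R * cb 2%N + cb 4%N) by eexists.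
have eZ : Alt6 (ya * u + yb * v) = At * rnum (qplus m g) + Bt * rnum (qminus m g).
  have Hu := Alt_u m g _ hca. have Hv := Alt_v m g _ hcb. rewrite eu in Hu. rewrite ev in Hv.
  rewrite Alt6D eya' eyb'. rewrite Hu. rewrite Hv. rewrite eAt eBt.
  move: (rnum (qplus m g)) (rnum (qminus m g)) e1 e2 => qp qm E1 E2.
  move: (ca 1%N) (ca 2%N) (ca 3%N) (ca 4%N) (ca 5%N) => a1 a2 a3 a4 a5.
  move: (cb 1%N) (cb 2%N) (cb 3%N) (cb 4%N) (cb 5%N) => b1 b2 b3 b4 b5.
  ring.
rewrite eZ in hT.
have symAt : At \is symmetric by rewrite eAt; symtac.
have symBt : Bt \is symmetric by rewrite eBt; symtac.
have symDs : D \is symmetric by apply/symPE => s; apply: symD.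
have [i6 ei6] : exists i6, i6 = ((6%:R : rat)^-1)%:MP :> Pol by eexists.
have h6 : i6 * 6%:R = 1.
  by rewrite ei6 -(rmorph_nat (@mpolyC 3 rat)) -rmorphM mulVf ?rmorph1.
exists ((6%:R : rat)^-1 *: (D ^+ K * At)), ((6%:R : rat)^-1 *: (D ^+ K * Bt)), (K + N + e)%N.
split; first by apply: rpredZ; apply: rpredM => //; apply: rpredX.
split; first by apply: rpredZ; apply: rpredM => //; apply: rpredX.
rewrite (_ : qplus m g = mkRF (rnum (qplus m g)) 0) // (_ : qminus m g = mkRF (rnum (qminus m g)) 0) //.
move: hT; move: (rnum (qplus m g)) (rnum (qminus m g)) => qp qm hT.
exists 0%N; rewrite /= !addn0 -!mul_mpolyC -ei6 eD.
apply: (@I0_eq _ (D ^+ (K + N + e + e) * (i6 * (6%:R * (D ^+ (K + N) * x) - D ^+ K * (At * qp + Bt * qm)))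
   + D ^+ (K + N + e + e) * (1 - i6 * 6%:R) * (D ^+ (K + N) * x))).
  rewrite !exprD expr0; move: (D ^+ K) (D ^+ N) (D ^+ e) => dK dN de; ring.
rewrite h6 subrr mulr0 mul0r addr0; apply: I0M; apply: I0M; exact: hT.
Qed.

Lemma symRF_of m g (A : Pol) E : A \is symmetric -> symRF m g (mkRF A E).
Proof. by move=> h s; apply: eqRF_exact => /=; rewrite (issymP _ h s). Qed.

Theorem lemma5p11 (m : nat) (g : {poly int}) (hg : forall k, 0 <= g`_k) :
  (* q_+ and q_- lie in (I_F^sgn)^W *)
  (antiRF m g (qplus m g) /\ inIF m g (qplus m g)) /\
  (antiRF m g (qminus m g) /\ inIF m g (qminus m g)) /\
  (* they generate (I_F^sgn)^W as an R_F^W-module *)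
  (forall p : RF, antiRF m g p -> inIF m g p ->
     exists a b : RF, symRF m g a /\ symRF m g b /\
       eqRF m g p (addRF m g (mulRF a (qplus m g)) (mulRF b (qminus m g)))) /\
  (* Psi(q_+-) exists and equals -(1/Delta) det(...) *)
  (exists r : RF, symRF m g r /\ eqRF m g (mulRF (inRF Delta) r) (qplus m g) /\
       eqRF m g (mulRF (inRF Delta) r) (inRF (- detMat m g true))) /\
  (exists r : RF, symRF m g r /\ eqRF m g (mulRF (inRF Delta) r) (qminus m g) /\
       eqRF m g (mulRF (inRF Delta) r) (inRF (- detMat m g false))) /\
  (* consequently Psi((I_F^sgn)^W) is generated by Psi(q_+), Psi(q_-) *)
  (forall rp rm : RF,
     symRF m g rp -> eqRF m g (mulRF (inRF Delta) rp) (qplus m g) ->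
     symRF m g rm -> eqRF m g (mulRF (inRF Delta) rm) (qminus m g) ->
     forall p r : RF, antiRF m g p -> inIF m g p ->
       symRF m g r -> eqRF m g (mulRF (inRF Delta) r) p ->
       exists a b : RF, symRF m g a /\ symRF m g b /\
         eqRF m g r (addRF m g (mulRF a rp) (mulRF b rm))).

Proof.
split; first by split; [exact: anti_qplus | exact: inI_qplus].
split; first by split; [exact: anti_qminus | exact: inI_qminus].
split.
  move=> p hA hI; case: (@part3 m g _ hA hI) => A [B [E [hAs [hBs he]]]].
  by exists (mkRF A E), (mkRF B E); split; [exact: symRF_of | split; [exact: symRF_of|]].
split.
  exists (inRF (rhoP m g)); split; first exact: symRF_of (rhoP_sym m g).
  split; apply: eqRF_exact => /=; rewrite ?detP -/(QPf m g) Delta_rhoP //.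
split.
  exists (inRF (rhoM m g)); split; first exact: symRF_of (rhoM_sym m g).
  split; apply: eqRF_exact => /=; rewrite ?detM -/(QMf m g) Delta_rhoM //.
move=> rp rm hrps hrp hrms hrm p r hA hI hrs hr.
case: (@part3 m g _ hA hI) => A [B [E [hAs [hBs he]]]].
exists (mkRF A E), (mkRF B E); split; first exact: symRF_of.
split; first exact: symRF_of.
apply: eqRF_cancel.
apply: (eqRF_trans _ _ _ _ _ hr); apply: (eqRF_trans _ _ _ _ _ he).
apply: (eqRF_trans _ _ _ _ _ (eqRF_add _ _ _ _ _ _ (eqRF_mul _ _ _ _ _ _ (eqRF_refl _ _ _) (eqRF_sym _ _ _ _ hrp))
                                        (eqRF_mul _ _ _ _ _ _ (eqRF_refl _ _ _) (eqRF_sym _ _ _ _ hrm)))).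
case: rp rm {hrps hrp hrms hrm} => [xp ep] [xm em]; apply: eqRF_exact => /=.
move: (Dloc m g) (rnum (qplus m g)) (rnum (qminus m g)) => D qp qm.
rewrite !add0n !exprD; ring.
Qed.
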